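(* In the setting below, fix $(s,a)\in\mathcal{K}$ and a policy $\pi$. Let $u^\pi=\gamma(\widehat{P}_\mathcal{K}(\cdot|s,a)-P(\cdot|s,a))\widehat{V}^\pi$ and $u^*=\gamma(\widehat{P}_\mathcal{K}(\cdot|s,a)-P(\cdot|s,a))\widehat{V}^*$. Then $$\widehat{Q}^\pi=\widetilde{Q}^\pi_{u^\pi},\quad \widehat{Q}^*=\widetilde{Q}^{\widehat{\pi}^*}_{u^*}=\widetilde{Q}^*_{u^*},\quad -\tfrac{1}{1-\gamma}\le u^\pi\le\tfrac{1}{1-\gamma},\quad -\tfrac{1}{1-\gamma}\le u^*\le\tfrac{1}{1-\gamma}.$$
   Context: $M=(\mathcal{S},\mathcal{A},P,r,\gamma)$ is a discounted MDP (finite $\mathcal{S},\mathcal{A}$, $r\in[0,1]$, $\gamma\in(0,1)$) with linear representation $P(s'|s,a)=\sum_k\phi_k(s,a)\psi_k(s')$ satisfying the anchor-state assumption: anchors $\mathcal{K}=\{(s_k,a_k)\}_{k=1}^K$, $\lambda_k^{s,a}\ge0$, $\sum_k\lambda_k^{s,a}=1$, $\phi(s,a)=\sum_k\lambda_k^{s,a}\phi(s_k,a_k)$. $\widehat{P}_\mathcal{K}(\cdot|s_k,a_k)$ is the empirical distribution of $N$ samples from $P(\cdot|s_k,a_k)$; $\widehat{P}(s'|s'',a'')=\sum_k\lambda_k^{s'',a''}\widehat{P}_\mathcal{K}(s'|s_k,a_k)$; $\widehat{M}=(\mathcal{S},\mathcal{A},\widehat{P},r,\gamma)$ with Q-functions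 $\widehat{Q}^\pi$, value functions $\widehat{V}^\pi$, optimal policy $\widehat{\pi}^*$, $\widehat{V}^*=\widehat{V}^{\widehat{\pi}^*}$, $\widehat{Q}^*=\widehat{Q}^{\widehat{\pi}^*}$. Auxiliary MDP: for $(s,a)=(s_j,a_j)\in\mathcal{K}$ and $u\in\mathbb{R}$, $\widetilde{M}_{s,a,u}=(\mathcal{S},\mathcal{A},\widetilde{P},r+u\Lambda^{s,a},\gamma)$ where $\widetilde{P}_\mathcal{K}(\cdot|s_k,a_k)=\widehat{P}_\mathcal{K}(\cdot|s_k,a_k)$ for $k\ne j$ and $\widetilde{P}_\mathcal{K}(\cdot|s_j,a_j)=P(\cdot|s,a)$, $\widetilde{P}(s'|s'',a'')=\sum_k\lambda_k^{s'',a''}\widetilde{P}_\mathcal{K}(s'|s_k,a_k)$, and $\Lambda^{s,a}\in\mathbb{R}^{\mathcal{S}\times\mathcal{A}}$ is the vector $(s'',a'')\mapsto\lambda_j^{s'',a''}$. $\widetilde{Q}^\pi_u$, $\widetilde{Q}^*_u$ denote the Q-function of $\pi$ and the optimal Q-function in $\widetilde{M}_{s,a,u}$. Here $\widehat{P}_\mathcal{K}(\cdot|s,a)V$ denotes $\sum_{s'}\widehat{P}_\mathcal{K}(s'|s,a)V(s')$. *)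

(* Defs.v *)
From mathcomp Require Import all_boot all_order all_algebra.
From mathcomp Require Import all_classical all_reals all_analysis.
Set Implicit Arguments. Unset Strict Implicit. Unset Printing Implicit Defensive.
Import Order.TTheory GRing.Theory Num.Theory numFieldNormedType.Exports.
Local Open Scope classical_set_scope.
Local Open Scope ring_scope.

Section MDP.
Variables (R : realType) (S A : finType).

Definition is_policy (pol : S -> A -> R) : Prop :=
  forall s, (forall a, 0 <= pol s a) /\ \sum_a pol s a = 1.

Definition is_kernel (P : S -> A -> S -> R) : Prop :=
  forall s a, (forall s', 0 <= P s a s') /\ \sum_s' P s a s' = 1.

Definition Vof (pol : S -> A -> R) (Q : S -> A -> R) : S -> R :=
  fun s => \sum_a pol s a * Q s a.

Definition bellman (P : S -> A -> S -> R) (r : S -> A -> R) (g : R)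
  (pol : S -> A -> R) (Q : S -> A -> R) : S -> A -> R :=
  fun s a => r s a + g * \sum_s' P s a s' * Vof pol Q s'.

(* Q^pi(s,a) = lim_n (expected discounted reward over the first n steps),
   the n-step return being iter n (bellman ...) 0. *)
Definition Qpi (P : S -> A -> S -> R) (r : S -> A -> R) (g : R)
  (pol : S -> A -> R) : S -> A -> R :=
  fun s a => limn (fun n : nat => iter n (bellman P r g pol) (fun _ _ => 0) s a : R).

Definition Vpi P r g pol : S -> R := Vof pol (Qpi P r g pol).

Definition is_optimal_policy P r g (pol : S -> A -> R) : Prop :=
  is_policy pol /\ forall pol', is_policy pol' -> forall s, Vpi P r g pol' s <= Vpi P r g pol s.

Definition Qopt P r g : S -> A -> R :=
  fun s a => sup [set Qpi P r g pol s a | pol in [set pol | is_policy pol]].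

Definition empirical (N : nat) (smp : 'I_N -> S) : S -> R :=
  fun s' => #|[set i | smp i == s']|%:R / N%:R.

Definition lin_extend (K : nat) (lam : S -> A -> 'I_K -> R) (PK : 'I_K -> S -> R)
  : S -> A -> S -> R :=
  fun s a s' => \sum_k lam s a k * PK k s'.

Definition PK_replace (K : nat) (PK : 'I_K -> S -> R) (j : 'I_K) (p : S -> R) : 'I_K -> S -> R :=
  fun k => if k == j then p else PK k.

Definition aux_reward (r : S -> A -> R) (K : nat) (lam : S -> A -> 'I_K -> R) (j : 'I_K) (u : R)
  : S -> A -> R :=
  fun s a => r s a + u * lam s a j.

Definition dotp (p V : S -> R) : R := \sum_s' p s' * V s'.

End MDP.

(* Main.v *)
Require Import Defs.
From mathcomp Require Import all_boot all_order all_algebra.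
From mathcomp Require Import all_classical all_reals all_analysis.
From mathcomp Require Import ring lra.
Import Order.TTheory GRing.Theory Num.Theory numFieldNormedType.Exports.
Local Open Scope classical_set_scope.
Local Open Scope ring_scope.

Section Aux.
Variables (R : realType) (S A : finType).
Implicit Types (P : S -> A -> S -> R) (pol : S -> A -> R) (Q : S -> A -> R).

Definition Lop P pol Q : S -> A -> R := fun s a => \sum_s' P s a s' * Vof pol Q s'.

Lemma Lop_lin P pol Q1 Q2 (c : R) s a :
  Lop P pol (fun s a => Q1 s a - c * Q2 s a) s a = Lop P pol Q1 s a - c * Lop P pol Q2 s a.
Proof.
rewrite /Lop /Vof mulr_sumr -sumrB; apply: eq_bigr => s' _.
rewrite !mulr_sumr -sumrB; apply: eq_bigr => a' _; ring.
Qed.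

Lemma Lop_mono P pol Q1 Q2 : is_kernel P -> is_policy pol ->
  (forall s a, Q1 s a <= Q2 s a) -> forall s a, Lop P pol Q1 s a <= Lop P pol Q2 s a.
Proof.
move=> hP hpol hQ s a; rewrite /Lop /Vof; apply: ler_sum => s' _.
apply: ler_wpM2l; first by case: (hP s a).
apply: ler_sum => a' _; apply: ler_wpM2l; first by case: (hpol s').
exact: hQ.
Qed.

Lemma Lop_const P pol (c : R) s a : is_kernel P -> is_policy pol ->
  Lop P pol (fun _ _ => c) s a = c.
Proof.
move=> hP hpol; rewrite /Lop /Vof.
under eq_bigr => s' _ do rewrite -mulr_suml (proj2 (hpol s')) mul1r.
by rewrite -mulr_suml (proj2 (hP s a)) mul1r.
Qed.

Lemma mintrick P pol (g : R) D : is_kernel P -> is_policy pol -> 0 <= g < 1 ->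
  (forall s a, g * Lop P pol D s a <= D s a) -> forall s a, 0 <= D s a.
Proof.
move=> hP hpol /andP[g0 g1] hD s a.
pose F := fun x : S * A => D x.1 x.2.
have [[sm am] _ hmin] := @arg_minP _ _ _ (s, a) xpredT F erefl.
set m := D sm am in hmin.
have hm : g * m <= m.
  apply: le_trans _ (hD sm am).
  rewrite -{1}(Lop_const P pol m sm am hP hpol); apply: ler_wpM2l => //.
  apply: Lop_mono => // s' a'; exact: (hmin (s', a')).
have m0 : 0 <= m.
  have : 0 <= m * (1 - g) by rewrite mulrBr mulr1 subr_ge0 mulrC.
  by rewrite pmulr_lge0 // subr_gt0.
exact: le_trans m0 (hmin (s, a) erefl).
Qed.

Lemma Lop_norm P pol D (B : R) s a : is_kernel P -> is_policy pol ->
  (forall s a, `|D s a| <= B) -> `|Lop P pol D s a| <= B.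
Proof.
move=> hP hpol hD; rewrite ler_norml; apply/andP; split.
  rewrite -(Lop_const P pol (- B) s a hP hpol); apply: Lop_mono => // s' a'.
  by have := hD s' a'; rewrite ler_norml => /andP[].
rewrite -(Lop_const P pol B s a hP hpol); apply: Lop_mono => // s' a'.
by have := hD s' a'; rewrite ler_norml => /andP[].
Qed.

Lemma bellmanE P r (g : R) pol Q s a :
  bellman P r g pol Q s a = r s a + g * Lop P pol Q s a.
Proof. by []. Qed.

Definition xseq P r (g : R) pol n := iter n (bellman P r g pol) (fun _ _ => 0).

Lemma xseq_step P r (g : R) pol M : is_kernel P -> is_policy pol -> 0 <= g < 1 ->
  (forall s a, `|r s a| <= M) ->
  forall n s a, `|xseq P r g pol n.+1 s a - xseq P r g pol n s a| <= M * g ^+ n.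
Proof.
move=> hP hpol /andP[g0 g1] hM; elim=> [|n IH] s a.
  rewrite /xseq /= bellmanE (Lop_const P pol 0 s a hP hpol) mulr0 addr0 subr0 expr0 mulr1.
  exact: hM.
rewrite /xseq !iterS !bellmanE -/(xseq P r g pol n) -iterS -/(xseq P r g pol n.+1).
have -> : r s a + g * Lop P pol (xseq P r g pol n.+1) s a -
   (r s a + g * Lop P pol (xseq P r g pol n) s a) =
   g * (Lop P pol (xseq P r g pol n.+1) s a - 1 * Lop P pol (xseq P r g pol n) s a) by ring.
rewrite -Lop_lin normrM ger0_norm // exprS mulrCA.
apply: ler_wpM2l => //; apply: Lop_norm => // s' a'.
by rewrite mul1r; exact: IH.
Qed.

Lemma xseq_bound P r (g : R) pol M : is_kernel P -> is_policy pol -> 0 <= g < 1 ->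
  (forall s a, `|r s a| <= M) ->
  forall n s a, `|xseq P r g pol n s a| <= (1 - g)^-1 * M.
Proof.
move=> hP hpol /andP[g0 g1] hM.
have hg : 0 < 1 - g by rewrite subr_gt0.
elim=> [|n IH] s a; have M0 := le_trans (normr_ge0 _) (hM s a).
  by rewrite /xseq /= normr0 mulr_ge0 // invr_ge0 ltW.
rewrite /xseq iterS bellmanE -/(xseq P r g pol n).
apply: le_trans (ler_normD _ _) _.
rewrite normrM ger0_norm //.
apply: le_trans (lerD (hM s a) (ler_wpM2l g0 (Lop_norm P pol _ _ s a hP hpol IH))) _.
rewrite le_eqVlt; apply/orP; left; apply/eqP; field.
by rewrite lt0r_neq0.
Qed.


Lemma sum_bound (r : S -> A -> R) s a :
  `|r s a| <= \sum_s' \sum_a' `|r s' a'|.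
Proof.
rewrite (bigD1 s) //= (bigD1 a) //= -addrA lerDl.
by apply: addr_ge0; apply: sumr_ge0 => i _ //; apply: sumr_ge0.
Qed.

Lemma xseq_cvg P r (g : R) pol : is_kernel P -> is_policy pol -> 0 <= g < 1 ->
  forall s a, cvgn (fun n => xseq P r g pol n s a).
Proof.
move=> hP hpol hg s a.
have /andP[g0 g1] := hg.
set M := \sum_s' \sum_a' `|r s' a'|.
have hM : forall s a, `|r s a| <= M by move=> s' a'; exact: sum_bound.
have hg1 : 0 < 1 - g by rewrite subr_gt0.
pose z n := xseq P r g pol n s a + (1 - g)^-1 * (M * g ^+ n).
pose w n := (1 - g)^-1 * (M * g ^+ n).
have hz : cvgn z.
  apply: nonincreasing_is_cvgn.
    apply/nonincreasing_seqP => n.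
    have := xseq_step P r g pol M hP hpol hg hM n s a; rewrite ler_norml => /andP[_ h].
    rewrite -subr_ge0.
    have -> : z n - z n.+1 = M * g ^+ n - (xseq P r g pol n.+1 s a - xseq P r g pol n s a).
      by rewrite /z exprS; field; rewrite lt0r_neq0.
    by rewrite subr_ge0.
  exists (- ((1 - g)^-1 * M)) => _ [n _ <-].
  have := xseq_bound P r g pol M hP hpol hg hM n s a; rewrite ler_norml => /andP[h _].
  rewrite /z; apply: le_trans h _; rewrite lerDl.
  apply: mulr_ge0; first by rewrite invr_ge0 ltW.
  apply: mulr_ge0; last exact: exprn_ge0.
  exact: le_trans (normr_ge0 _) (hM s a).
have hw : cvgn w.
  apply: cvgP; apply: cvgMr; apply: cvgMr; apply: cvg_expr.
  by rewrite ger0_norm.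
have -> : (fun n => xseq P r g pol n s a) = (fun n => z n - w n).
  by apply/funext => n; rewrite /z /w addrK.
exact: (is_cvgB hz hw).
Qed.


Lemma cvg_sumR (I : finType) (f : I -> nat -> R) (l : I -> R) :
  (forall i, f i n @[n --> \oo] --> l i) ->
  (\sum_i f i n) @[n --> \oo] --> \sum_i l i.
Proof.
move=> h; apply: cvg_big => //; first exact: add_continuous.
Qed.

Lemma Qpi_fix P r (g : R) pol : is_kernel P -> is_policy pol -> 0 <= g < 1 ->
  bellman P r g pol (Qpi P r g pol) = Qpi P r g pol.
Proof.
move=> hP hpol hg; apply/funext => s; apply/funext => a.
have hc := xseq_cvg P r g pol hP hpol hg.
have h1 : (fun n => xseq P r g pol n.+1 s a) @ \oo --> bellman P r g pol (Qpi P r g pol) s a.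
  have -> : (fun n => xseq P r g pol n.+1 s a) = fun n => r s a + g *
     \sum_s' P s a s' * \sum_a' pol s' a' * xseq P r g pol n s' a' by [].
  rewrite /bellman /Vof.
  apply: cvgD; first exact: cvg_cst.
  apply: cvgMr; apply: cvg_sumR => s'; apply: cvgMr; apply: cvg_sumR => a'.
  apply: cvgMr; exact: (hc s' a').
move: h1; rewrite (cvg_shiftS (fun n => xseq P r g pol n s a)) => h1.
have e : limn (fun n => xseq P r g pol n s a) = bellman P r g pol (Qpi P r g pol) s a.
  by apply: cvg_lim.
by rewrite -e.
Qed.

Lemma fix_uniq P r (g : R) pol Q1 Q2 : is_kernel P -> is_policy pol -> 0 <= g < 1 ->
  bellman P r g pol Q1 = Q1 -> bellman P r g pol Q2 = Q2 -> Q1 = Q2.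
Proof.
move=> hP hpol hg h1 h2.
have key : forall Qa Qb, bellman P r g pol Qa = Qa -> bellman P r g pol Qb = Qb ->
    forall s a, 0 <= Qa s a - 1 * Qb s a.
  move=> Qa Qb ha hb; apply: (mintrick P pol g _ hP hpol hg) => s a.
  rewrite Lop_lin.
  have -> : Qa s a - 1 * Qb s a = bellman P r g pol Qa s a - 1 * bellman P r g pol Qb s a
    by rewrite ha hb.
  rewrite !bellmanE le_eqVlt; apply/orP; left; apply/eqP; ring.
apply/funext => s; apply/funext => a; apply/eqP; rewrite eq_le.
have := key _ _ h1 h2 s a; have := key _ _ h2 h1 s a.
by rewrite !mul1r !subr_ge0 => -> ->.
Qed.

Lemma Qpi_uniq P r (g : R) pol Q : is_kernel P -> is_policy pol -> 0 <= g < 1 ->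
  bellman P r g pol Q = Q -> Q = Qpi P r g pol.
Proof.
move=> hP hpol hg h; apply: (fix_uniq P r g pol Q _ hP hpol hg h); exact: Qpi_fix.
Qed.


Lemma convex_le (I : finType) (w f : I -> R) (c : R) :
  (forall i, 0 <= w i) -> \sum_i w i = 1 -> (forall i, f i <= c) -> \sum_i w i * f i <= c.
Proof.
move=> w0 w1 hf; apply: le_trans (_ : \sum_i w i * c <= c).
  by apply: ler_sum => i _; apply: ler_wpM2l.
by rewrite -mulr_suml w1 mul1r.
Qed.

Lemma convex_ge0 (I : finType) (w f : I -> R) :
  (forall i, 0 <= w i) -> (forall i, 0 <= f i) -> 0 <= \sum_i w i * f i.
Proof. by move=> w0 hf; apply: sumr_ge0 => i _; apply: mulr_ge0. Qed.

Lemma empirical_dist N (smp : 'I_N -> S) : (0 < N)%N ->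
  (forall s', 0 <= empirical R smp s') /\ \sum_s' empirical R smp s' = 1.
Proof.
move=> N0; split=> [s'|].
  by rewrite /empirical divr_ge0 // ler0n.
rewrite /empirical -mulr_suml.
have -> : \sum_s' (#|[set i | smp i == s']|%:R : R) = N%:R.
  transitivity (\sum_s' \sum_i ((smp i == s')%:R : R)).
    apply: eq_bigr => s' _; rewrite -sum1_card natr_sum big_mkcond /=.
    by apply: eq_bigr => i _; rewrite /in_mem /= /in_set /mkset asboolb; case: (smp i == s').
  rewrite exchange_big /= -[in RHS](card_ord N) -sum1_card natr_sum.
  apply: eq_bigr => i _; rewrite (bigD1 (smp i)) //= eqxx big1 ?addr0 //.
  by move=> s' /negbTE; rewrite eq_sym => ->.
by rewrite mulfV // pnatr_eq0 -lt0n.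
Qed.

Lemma lin_extend_kernel K (lam : S -> A -> 'I_K -> R) PK :
  (forall s a k, 0 <= lam s a k) -> (forall s a, \sum_k lam s a k = 1) ->
  (forall k, (forall s', 0 <= PK k s') /\ \sum_s' PK k s' = 1) ->
  is_kernel (lin_extend lam PK).
Proof.
move=> l0 l1 hPK s a; split=> [s'|].
  by apply: sumr_ge0 => k _; apply: mulr_ge0 => //; case: (hPK k).
rewrite /lin_extend exchange_big /= -(l1 s a); apply: eq_bigr => k _.
by rewrite -mulr_sumr (proj2 (hPK k)) mulr1.
Qed.

Lemma decomp K (lam : S -> A -> 'I_K -> R) PK j p V s a :
  \sum_s' lin_extend lam PK s a s' * V s' =
  \sum_s' lin_extend lam (PK_replace PK j p) s a s' * V s' +
  lam s a j * (dotp (PK j) V - dotp p V).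
Proof.
rewrite /dotp -sumrB mulr_sumr -big_split /=; apply: eq_bigr => s' _.
rewrite /lin_extend (bigD1 j) //= [X in _ = X * _ + _](bigD1 j) //= /PK_replace eqxx.
have -> : \sum_(i < K | i != j) lam s a i * (if i == j then p else PK i) s' =
          \sum_(i < K | i != j) lam s a i * PK i s'.
  by apply: eq_bigr => i /negbTE ->.
ring.
Qed.

Lemma transfer K (lam : S -> A -> 'I_K -> R) PK j p r (g : R) pol Q :
  bellman (lin_extend lam PK) r g pol Q =
  bellman (lin_extend lam (PK_replace PK j p))
    (aux_reward r lam j (g * (dotp (PK j) (Vof pol Q) - dotp p (Vof pol Q)))) g pol Q.
Proof.
apply/funext => s; apply/funext => a.
rewrite /bellman (decomp _ lam PK j p) /aux_reward; ring.
Qed.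

Lemma Q_bounds P r (g : R) pol : is_kernel P -> is_policy pol -> 0 < g < 1 ->
  (forall s a, 0 <= r s a <= 1) ->
  forall s a, 0 <= Qpi P r g pol s a <= (1 - g)^-1.
Proof.
move=> hP hpol /andP[g0 g1] hr.
have hg : 0 <= g < 1 by rewrite ltW.
have hfix := Qpi_fix P r g pol hP hpol hg.
set Q := Qpi P r g pol in hfix *.
have hg1 : 0 < 1 - g by rewrite subr_gt0.
move=> s a; apply/andP; split.
  apply: (mintrick P pol g Q hP hpol hg) => s' a'.
  rewrite -{2}hfix bellmanE lerDr; by case/andP: (hr s' a').
have hQc : forall s a, 0 <= (1 - g)^-1 - 1 * Q s a.
  apply: (mintrick P pol g (fun s a => (1 - g)^-1 - 1 * Q s a) hP hpol hg) => s' a'.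
  rewrite (Lop_lin P pol (fun _ _ => (1 - g)^-1) Q 1) Lop_const // -{2}hfix bellmanE.
  have := hr s' a'; case/andP=> _ h.
  have e : (1 - g)^-1 = 1 + g * (1 - g)^-1 by field; rewrite lt0r_neq0.
  rewrite {2}e; move: (Lop P pol Q s' a') => x; rewrite !mul1r; lra.
by have := hQc s a; rewrite mul1r subr_ge0.
Qed.

Lemma u_bound (g x y : R) : 0 < g < 1 -> 0 <= x <= (1 - g)^-1 -> 0 <= y <= (1 - g)^-1 ->
  - (1 - g)^-1 <= g * (x - y) <= (1 - g)^-1.
Proof.
move=> /andP[g0 g1]; move: ((1 - g)^-1) => c /andP[x0 xc] /andP[y0 yc].
apply/andP; split; nra.
Qed.


Lemma Lop_monoV P pol pol' Q Q' s a : is_kernel P ->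
  (forall s', Vof pol Q s' <= Vof pol' Q' s') -> Lop P pol Q s a <= Lop P pol' Q' s a.
Proof.
move=> hP h; apply: ler_sum => s' _; apply: ler_wpM2l => //; by case: (hP s a).
Qed.

Lemma cmp P r (g : R) polD pol1 pol2 Q1 Q2 : 0 <= g ->
  (forall s a, Lop P polD Q1 s a - Lop P polD Q2 s a <= Lop P pol1 Q1 s a - Lop P pol2 Q2 s a) ->
  bellman P r g pol1 Q1 = Q1 -> bellman P r g pol2 Q2 = Q2 ->
  forall s a, g * Lop P polD (fun s a => Q1 s a - 1 * Q2 s a) s a <= Q1 s a - 1 * Q2 s a.
Proof.
move=> g0 hyp h1 h2 s a; rewrite Lop_lin.
have -> : Q1 s a - 1 * Q2 s a = bellman P r g pol1 Q1 s a - 1 * bellman P r g pol2 Q2 s a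
  by rewrite h1 h2.
rewrite !bellmanE !mul1r.
have := ler_wpM2l g0 (hyp s a).
move: (Lop P polD Q1 s a) (Lop P polD Q2 s a) (Lop P pol1 Q1 s a) (Lop P pol2 Q2 s a) => x y z w.
move=> h; rewrite mulrBr; rewrite mulrBr in h; lra.
Qed.

Lemma opt_ge P r (g : R) pihat : is_kernel P -> 0 <= g < 1 ->
  is_optimal_policy P r g pihat -> forall s a, Qpi P r g pihat s a <= Vpi P r g pihat s.
Proof.
move=> hP hg [hpi hopt] s0 a0; rewrite leNgt; apply/negP => hlt.
pose pol' := fun s a => if s == s0 then ((a == a0)%:R : R) else pihat s a.
have hind : forall Q : S -> A -> R, Vof pol' Q s0 = Q s0 a0.
  move=> Q; rewrite /Vof /pol' eqxx (bigD1 a0) //= eqxx mul1r big1 ?addr0 //.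
  by move=> a /negbTE ->; rewrite mul0r.
have hpol' : is_policy pol'.
  move=> s; rewrite /pol'; case: (s == s0); last exact: hpi.
  split=> [a|]; first by rewrite ler0n.
  by rewrite (bigD1 a0) //= eqxx big1 ?addr0 // => a /negbTE ->.
set Qs := Qpi P r g pihat in hlt *.
set Qp := Qpi P r g pol'.
have hE := mintrick P pol' g (fun s a => Qp s a - 1 * Qs s a) hP hpol' hg.
have hE' : forall s a, 0 <= Qp s a - 1 * Qs s a.
  apply: hE; apply: (cmp P r g pol' pol' pihat) => //.
  - by case/andP: hg.
  - move=> s a; rewrite lerD2l lerN2; apply: Lop_monoV => // s'.
    case: (eqVneq s' s0) => [->|ne].
      by rewrite hind; apply: ltW.
    by rewrite /Vof /pol' (negbTE ne).
  - exact: Qpi_fix.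
  - exact: Qpi_fix.
have := hopt pol' hpol' s0; rewrite /Vpi hind -/Qp.
have := hE' s0 a0; rewrite mul1r subr_ge0 => h1 h2.
have := le_lt_trans h2 hlt; rewrite /Vpi -/Qs => h3.
by have := le_lt_trans h1 h3; rewrite ltxx.
Qed.

End Aux.
Theorem lemma6 (R : realType) (S A : finType)
  (P : S -> A -> S -> R) (r : S -> A -> R) (g : R)
  (d : nat) (phi : S -> A -> 'I_d -> R) (psi : 'I_d -> S -> R)
  (K : nat) (sK : 'I_K -> S) (aK : 'I_K -> A) (lam : S -> A -> 'I_K -> R)
  (N : nat) (smp : 'I_K -> 'I_N -> S)
  (j : 'I_K) (pi pihat : S -> A -> R) :
  is_kernel P ->
  (forall s a, 0 <= r s a <= 1) ->
  0 < g < 1 ->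
  (forall s a s', P s a s' = \sum_(k < d) phi s a k * psi k s') ->
  (forall s a k, 0 <= lam s a k) ->
  (forall s a, \sum_(k < K) lam s a k = 1) ->
  (forall s a i, phi s a i = \sum_(k < K) lam s a k * phi (sK k) (aK k) i) ->
  (0 < N)%N ->
  let PKhat : 'I_K -> S -> R := fun k => empirical R (smp k) in
  let Phat := lin_extend lam PKhat in
  let Ptil := lin_extend lam (PK_replace PKhat j (P (sK j) (aK j))) in
  is_policy pi ->
  is_optimal_policy Phat r g pihat ->
  let upi := g * (dotp (PKhat j) (Vpi Phat r g pi)
                  - dotp (P (sK j) (aK j)) (Vpi Phat r g pi)) in
  let ustar := g * (dotp (PKhat j) (Vpi Phat r g pihat)
                    - dotp (P (sK j) (aK j)) (Vpi Phat r g pihat)) in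
  [/\ Qpi Phat r g pi = Qpi Ptil (aux_reward r lam j upi) g pi,
      Qpi Phat r g pihat = Qpi Ptil (aux_reward r lam j ustar) g pihat,
      Qpi Ptil (aux_reward r lam j ustar) g pihat = Qopt Ptil (aux_reward r lam j ustar) g,
      - (1 - g)^-1 <= upi <= (1 - g)^-1
    & - (1 - g)^-1 <= ustar <= (1 - g)^-1].
Proof.
move=> hP hr hg hPlin hl0 hl1 hphi N0 PKhat Phat Ptil hpi hopt upi ustar.
have hg' : 0 <= g < 1 by case/andP: hg => g0 g1; rewrite ltW.
have [g0 g1] := andP hg.
have hPK : forall k, (forall s', 0 <= PKhat k s') /\ \sum_s' PKhat k s' = 1.
  by move=> k; exact: empirical_dist.
have hPhat : is_kernel Phat by apply: lin_extend_kernel.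
have hPtil : is_kernel Ptil.
  apply: lin_extend_kernel => // k; rewrite /PK_replace; case: (k == j); last exact: hPK.
  exact: hP.
have hpihat := proj1 hopt.
have fixT : forall pol, is_policy pol ->
    bellman Ptil (aux_reward r lam j (g * (dotp (PKhat j) (Vpi Phat r g pol)
       - dotp (P (sK j) (aK j)) (Vpi Phat r g pol)))) g pol (Qpi Phat r g pol) = Qpi Phat r g pol.
  move=> pol hpol.
  rewrite -(@transfer _ _ _ _ lam PKhat j (P (sK j) (aK j)) r g pol (Qpi Phat r g pol)).
  exact: Qpi_fix.
have key : forall pol, is_policy pol ->
    Qpi Phat r g pol = Qpi Ptil (aux_reward r lam j (g * (dotp (PKhat j) (Vpi Phat r g pol)
       - dotp (P (sK j) (aK j)) (Vpi Phat r g pol)))) g pol.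
  by move=> pol hpol; apply: Qpi_uniq => //; exact: fixT.
have hc : 0 <= (1 - g)^-1 by rewrite invr_ge0 subr_ge0 ltW.
have Vb : forall pol, is_policy pol -> forall s, 0 <= Vpi Phat r g pol s <= (1 - g)^-1.
  move=> pol hpol s; have hQ := @Q_bounds _ _ _ Phat r g pol hPhat hpol hg hr.
  apply/andP; split.
    by apply: convex_ge0 => a; [case: (hpol s) | case/andP: (hQ s a)].
  apply: convex_le => [a||a]; first by case: (hpol s).
    by case: (hpol s).
  by case/andP: (hQ s a).
have Db : forall (p : S -> R) V, (forall s', 0 <= p s') -> \sum_s' p s' = 1 ->
    (forall s, 0 <= V s <= (1 - g)^-1) -> 0 <= dotp p V <= (1 - g)^-1.
  move=> p V p0 p1 hV; apply/andP; split.
    by apply: convex_ge0 => // s; case/andP: (hV s).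
  by apply: convex_le => // s; case/andP: (hV s).
have ub : forall pol, is_policy pol ->
    - (1 - g)^-1 <= g * (dotp (PKhat j) (Vpi Phat r g pol)
       - dotp (P (sK j) (aK j)) (Vpi Phat r g pol)) <= (1 - g)^-1.
  move=> pol hpol; apply: u_bound => //; apply: Db; try exact: Vb.
  - by case: (hPK j).
  - by case: (hPK j).
  - by case: (hP (sK j) (aK j)).
  - by case: (hP (sK j) (aK j)).
split.
- exact: key.
- exact: key.
- rewrite -(key pihat hpihat).
  have hge := @opt_ge _ _ _ Phat r g pihat hPhat hg' hopt.
  have fixs := fixT pihat hpihat.
  set r2 := aux_reward _ _ _ _ in fixs *.
  set Qs := Qpi Phat r g pihat in hge fixs *.
  have ubd : forall pol, is_policy pol -> forall s a, Qpi Ptil r2 g pol s a <= Qs s a.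
    move=> pol hpol s a.
    have := @mintrick _ _ _ Ptil pol g (fun s a => Qs s a - 1 * Qpi Ptil r2 g pol s a) hPtil hpol hg'.
    move=> /(_ _ s a); rewrite mul1r subr_ge0; apply.
    apply: (@cmp _ _ _ Ptil r2 g pol pihat pol) => //.
    + exact: ltW.
    + move=> s' a'; rewrite lerD2r; apply: Lop_monoV => // s''.
      apply: convex_le => [a''||a'']; first by case: (hpol s'').
        by case: (hpol s'').
      exact: hge.
    + exact: Qpi_fix.
  apply/funext => s; apply/funext => a; rewrite /Qopt.
  have inE : [set Qpi Ptil r2 g pol s a | pol in [set pol | is_policy pol]] (Qs s a).
    exists pihat => //; by rewrite /Qs (key pihat hpihat).
  apply/eqP; rewrite eq_le; apply/andP; split.
    apply: ub_le_sup => //.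
    by exists (Qs s a) => _ [pol hpol <-]; apply: ubd.
  apply: ge_sup; first by exists (Qs s a).
  by move=> _ [pol hpol <-]; apply: ubd.
- exact: ub.
- exact: ub.
Qed.
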